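(* Let $S^2_{\geq 0}=\{(x,y,z):x^2+y^2+z^2=1,\ z\geq 0\}$ and let $O=(0,0,0)$. If $A,B,C,D$ are four points on $S^2_{\geq 0}$ such that the sum $AB+AC+AD+BC+BD+CD$ of their pairwise Euclidean distances is maximal (among all quadruples of points of $S^2_{\geq 0}$), then $O$ is contained in the interior of the convex hull of $A,B,C,D$ or lies on one of its faces (surfaces). *)

(* Defs.v *)
From Stdlib Require Import Reals.
Open Scope R_scope.

Record pt3 : Type := Pt { px : R; py : R; pz : R }.

Definition upper_hemisphere (p : pt3) : Prop :=
  px p ^ 2 + py p ^ 2 + pz p ^ 2 = 1 /\ 0 <= pz p.

Definition dist3 (p q : pt3) : R :=
  sqrt ((px p - px q) ^ 2 + (py p - py q) ^ 2 + (pz p - pz q) ^ 2).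

Definition sum_dist4 (A B C D : pt3) : R :=
  dist3 A B + dist3 A C + dist3 A D + dist3 B C + dist3 B D + dist3 C D.

Definition in_convex_hull4 (P A B C D : pt3) : Prop :=
  exists a b c d : R,
    0 <= a /\ 0 <= b /\ 0 <= c /\ 0 <= d /\ a + b + c + d = 1 /\
    px P = a * px A + b * px B + c * px C + d * px D /\
    py P = a * py A + b * py B + c * py C + d * py D /\
    pz P = a * pz A + b * pz B + c * pz C + d * pz D.

Definition origin3 : pt3 := Pt 0 0 0.

(* Main.v *)
Require Import Defs.
From Stdlib Require Import Reals Lra Lia Psatz Classical.
Open Scope R_scope.

Definition dot (p q : pt3) : R := px p * px q + py p * py q + pz p * pz q.

Fixpoint rs (m : nat) (f : nat -> R) : R :=
  match m with O => 0 | S k => rs k f + f k end.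

Lemma rs_ext m f g : (forall i, (i < m)%nat -> f i = g i) -> rs m f = rs m g.
Proof.
  induction m; simpl; intros H; [reflexivity|].
  rewrite IHm by (intros; apply H; lia). rewrite H by lia. reflexivity.
Qed.

Lemma rs_plus m f g : rs m (fun i => f i + g i) = rs m f + rs m g.
Proof. induction m; simpl; [ring|]. rewrite IHm. ring. Qed.

Lemma rs_scalr m c f : rs m (fun i => f i * c) = rs m f * c.
Proof. induction m; simpl; [ring|]. rewrite IHm. ring. Qed.

Lemma rs_nonneg m f : (forall i, (i<m)%nat -> 0 <= f i) -> 0 <= rs m f.
Proof.
  induction m; simpl; intros H; [lra|].
  assert (0 <= rs m f) by (apply IHm; intros; apply H; lia).
  assert (0 <= f m) by (apply H; lia). lra.
Qed.

Lemma rs_pos_mul m l a : (forall i, (i<m)%nat -> 0 <= l i) ->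
  (forall i, (i<m)%nat -> 0 < a i) -> 0 < rs m l -> 0 < rs m (fun i => l i * a i).
Proof.
  induction m; simpl; intros Hl Ha Hs; [lra|].
  assert (Hlm : 0 <= l m) by (apply Hl; lia).
  assert (Ham : 0 < a m) by (apply Ha; lia).
  destruct (Rlt_or_le 0 (rs m l)) as [H|H].
  - assert (0 < rs m (fun i => l i * a i)).
    { apply IHm; auto; intros; first [apply Hl|apply Ha]; lia. }
    nra.
  - assert (0 <= rs m l) by (apply rs_nonneg; intros; apply Hl; lia).
    assert (0 <= rs m (fun i => l i * a i)).
    { apply rs_nonneg; intros i Hi.
      assert (0 <= l i) by (apply Hl; lia). assert (0 < a i) by (apply Ha; lia). nra. }
    nra.
Qed.

Lemma small_e m (A c : nat -> R) : (forall i, (i<m)%nat -> 0 < A i) ->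
  exists e, 0 < e /\ forall t, 0 < t <= e -> forall i, (i<m)%nat -> 0 < A i + t * c i.
Proof.
  induction m; intros HA.
  - exists 1. split; [lra|]. intros. lia.
  - destruct IHm as [e [He Ht]]. { intros; apply HA; lia. }
    assert (Hm : 0 < A m) by (apply HA; lia).
    assert (Hk : 0 < Rabs (c m) + 1) by (pose proof (Rabs_pos (c m)); lra).
    exists (Rmin e (A m / (Rabs (c m) + 1))). split.
    + apply Rmin_pos; auto. apply Rdiv_lt_0_compat; lra.
    + intros t [Ht0 Hte] i Hi.
      pose proof (Rmin_l e (A m / (Rabs (c m) + 1))).
      pose proof (Rmin_r e (A m / (Rabs (c m) + 1))).
      destruct (Nat.lt_ge_cases i m).
      * apply Ht; auto; lra.
      * assert (i = m) by lia. subst i.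
        assert (t * (Rabs (c m) + 1) <= A m).
        { replace (A m) with (A m / (Rabs (c m) + 1) * (Rabs (c m) + 1)) by (field; lra).
          apply Rmult_le_compat_r; lra. }
        pose proof (Rle_abs (- c m)). rewrite Rabs_Ropp in *.
        nra.
Qed.

Definition comb (m:nat) (v : nat -> pt3) (l : nat -> R) : Prop :=
  (forall i, (i<m)%nat -> 0 <= l i) /\ 0 < rs m l /\
  rs m (fun i => l i * px (v i)) = 0 /\ rs m (fun i => l i * py (v i)) = 0 /\
  rs m (fun i => l i * pz (v i)) = 0.
Definition sep (m:nat) (v : nat -> pt3) (u:pt3) : Prop :=
  forall i, (i<m)%nat -> 0 < dot u (v i).

Lemma ext_comp m (l : nat -> R) (vx : nat -> R) :
  rs m (fun i => l i * vx i) = 0 ->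
  rs (S m) (fun i => (if (i <? m)%nat then l i else 0) * vx i) = 0.
Proof.
  intros H. simpl. rewrite Nat.ltb_irrefl.
  rewrite (rs_ext m _ (fun i => l i * vx i)). lra.
  intros i Hi. rewrite (proj2 (Nat.ltb_lt i m) Hi). reflexivity.
Qed.

Lemma comb_comp m (mu du vx : nat -> R) (a : R) :
  rs m (fun i => mu i * (du i * vx m + (-a) * vx i)) = 0 ->
  rs (S m) (fun i => (if (i <? m)%nat then mu i * (-a) else rs m (fun j => mu j * du j)) * vx i) = 0.
Proof.
  intros H. simpl. rewrite Nat.ltb_irrefl.
  rewrite (rs_ext m _ (fun i => mu i * (-a) * vx i)).
  2:{ intros i Hi. rewrite (proj2 (Nat.ltb_lt i m) Hi). reflexivity. }
  rewrite (rs_ext m _ (fun i => (mu i * du i) * vx m + mu i * (-a) * vx i)) in H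
    by (intros; ring).
  rewrite rs_plus, rs_scalr in H. lra.
Qed.

Lemma gordan_step m (v : nat -> pt3) : (1 <= m)%nat ->
  (forall w, (exists u, sep m w u) \/ (exists l, comb m w l)) ->
  (exists u, sep (S m) v u) \/ (exists l, comb (S m) v l).
Proof.
  intros Hm IH.
  destruct (IH v) as [[u Hu] | [l [Hl1 [Hl2 [Hl3 [Hl4 Hl5]]]]]].
  2:{ right. exists (fun i => if (i <? m)%nat then l i else 0).
      split; [|split; [|split; [|split]]].
      - intros i Hi. destruct (Nat.ltb_spec i m); [apply Hl1; auto|lra].
      - pose proof (ext_comp m l (fun _ => 1)) as E.
        simpl in *. rewrite Nat.ltb_irrefl in *.
        rewrite (rs_ext m _ l). lra.
        intros i Hi. rewrite (proj2 (Nat.ltb_lt i m) Hi). reflexivity.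
      - apply ext_comp; auto.
      - apply ext_comp; auto.
      - apply ext_comp; auto. }
  destruct (Rlt_or_le 0 (dot u (v m))) as [Hum|Hum].
  { left. exists u. intros i Hi. destruct (Nat.lt_ge_cases i m).
    - apply Hu; auto.
    - assert (i = m) by lia. subst; auto. }
  set (a := dot u (v m)) in *.
  set (Q := fun i => Pt (dot u (v i) * px (v m) + (-a) * px (v i))
                        (dot u (v i) * py (v m) + (-a) * py (v i))
                        (dot u (v i) * pz (v m) + (-a) * pz (v i))).
  assert (HQ : forall w i, dot w (Q i) = dot u (v i) * dot w (v m) - a * dot w (v i)).
  { intros. unfold Q, dot; simpl. ring. }
  destruct (IH Q) as [[w Hw] | [mu [M1 [M2 [M3 [M4 M5]]]]]].
  - destruct (Req_dec a 0) as [Ha|Ha].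
    + assert (Hwm : 0 < dot w (v m)).
      { pose proof (Hw 0%nat ltac:(lia)) as H0. rewrite HQ in H0.
        pose proof (Hu 0%nat ltac:(lia)). rewrite Ha in H0.
        destruct (Rlt_or_le 0 (dot w (v m))); auto. nra. }
      destruct (small_e m (fun i => dot u (v i)) (fun i => dot w (v i)) Hu) as [e [He Ht]].
      left. exists (Pt (px u + e * px w) (py u + e * py w) (pz u + e * pz w)).
      intros i Hi.
      assert (E : forall x, dot (Pt (px u + e * px w) (py u + e * py w) (pz u + e * pz w)) x
                  = dot u x + e * dot w x) by (intros; unfold dot; simpl; ring).
      rewrite E. destruct (Nat.lt_ge_cases i m).
      * apply Ht; auto; lra.
      * assert (i = m) by lia. subst i. fold a. rewrite Ha. nra.
    + assert (Ha' : a < 0) by lra.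
      set (k := dot w (v m) / a).
      set (w0 := Pt (px w - k * px u) (py w - k * py u) (pz w - k * pz u)).
      assert (E0 : forall x, dot w0 x = dot w x - k * dot u x)
        by (intros; unfold w0, dot; simpl; ring).
      assert (Hw0 : forall i, (i<m)%nat -> 0 < dot w0 (v i)).
      { intros i Hi. rewrite E0.
        assert (dot w0 (v i) = dot w (Q i) / (- a)).
        { rewrite E0, HQ. unfold k. field. auto. }
        rewrite <- E0. rewrite H. apply Rdiv_lt_0_compat; [apply Hw; auto | lra]. }
      destruct (small_e m (fun i => dot w0 (v i)) (fun i => - dot u (v i)) Hw0) as [e [He Ht]].
      left. exists (Pt (px w0 - e * px u) (py w0 - e * py u) (pz w0 - e * pz u)).
      intros i Hi.
      assert (E : forall x, dot (Pt (px w0 - e * px u) (py w0 - e * py u) (pz w0 - e * pz u)) x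
                  = dot w0 x + e * (- dot u x)) by (intros; unfold dot; simpl; ring).
      rewrite E. destruct (Nat.lt_ge_cases i m).
      * apply (Ht e); auto; lra.
      * assert (i = m) by lia. subst i. rewrite E0. fold a.
        assert (k * a = dot w (v m)) by (unfold k; field; auto). nra.
  - right.
    set (Ssum := rs m (fun j => mu j * dot u (v j))).
    assert (HS : 0 < Ssum) by (apply rs_pos_mul; auto).
    exists (fun i => if (i <? m)%nat then mu i * (-a) else Ssum).
    split; [|split; [|split; [|split]]].
    + intros i Hi. destruct (Nat.ltb_spec i m).
      * assert (0 <= mu i) by (apply M1; auto). nra.
      * lra.
    + simpl. rewrite Nat.ltb_irrefl.
      rewrite (rs_ext m _ (fun i => mu i * (-a))).
      2:{ intros i Hi. rewrite (proj2 (Nat.ltb_lt i m) Hi). reflexivity. }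
      rewrite rs_scalr. assert (0 <= rs m mu) by lra. nra.
    + apply (comb_comp m mu (fun j => dot u (v j)) (fun i => px (v i)) a). exact M3.
    + apply (comb_comp m mu (fun j => dot u (v j)) (fun i => py (v i)) a). exact M4.
    + apply (comb_comp m mu (fun j => dot u (v j)) (fun i => pz (v i)) a). exact M5.
Qed.

Lemma gordan1 (v : nat -> pt3) : (exists u, sep 1 v u) \/ (exists l, comb 1 v l).
Proof.
  destruct (Req_dec (dot (v 0%nat) (v 0%nat)) 0) as [H0|H0].
  - right. exists (fun _ => 1). unfold dot in H0.
    assert (px (v 0%nat) = 0) by nra. assert (py (v 0%nat) = 0) by nra.
    assert (pz (v 0%nat) = 0) by nra.
    unfold comb; simpl. repeat split; intros; try lra.
  - left. exists (v 0%nat). intros i Hi. assert (i = 0%nat) by lia. subst.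
    unfold dot in *. nra.
Qed.

Lemma gordan4 (v : nat -> pt3) : (exists u, sep 4 v u) \/ (exists l, comb 4 v l).
Proof.
  apply gordan_step; [lia|]. intros w2.
  apply gordan_step; [lia|]. intros w1.
  apply gordan_step; [lia|]. intros w0.
  apply gordan1.
Qed.
Definition xb (b1 b2 : R) (p : pt3) := b1 * px p + b2 * py p.
Definition cr (b1 b2 : R) (q p : pt3) := xb b1 b2 q * pz p - pz q * xb b1 b2 p.
Definition wpos b1 b2 h w2 p := 0 < h * xb b1 b2 p + w2 * pz p.

Lemma diff_sq p q : upper_hemisphere p -> upper_hemisphere q ->
  (px p - px q) ^ 2 + (py p - py q) ^ 2 + (pz p - pz q) ^ 2 = 2 - 2 * dot p q.
Proof.
  intros [Hp _] [Hq _]. unfold dot.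
  replace ((px p - px q) ^ 2 + (py p - py q) ^ 2 + (pz p - pz q) ^ 2) with
    ((px p ^ 2 + py p ^ 2 + pz p ^ 2) + (px q ^ 2 + py q ^ 2 + pz q ^ 2)
     - 2 * (px p * px q + py p * py q + pz p * pz q)) by ring.
  rewrite Hp, Hq. ring.
Qed.

Lemma dist_lt p q p' : upper_hemisphere p -> upper_hemisphere q -> upper_hemisphere p' ->
  dot p' q < dot p q -> dist3 p q < dist3 p' q.
Proof.
  intros Hp Hq Hp' H. unfold dist3. rewrite !diff_sq by auto.
  apply sqrt_lt_1_alt. split; [|lra].
  rewrite <- diff_sq by auto. pose proof (pow2_ge_0 (px p - px q)).
  pose proof (pow2_ge_0 (py p - py q)). pose proof (pow2_ge_0 (pz p - pz q)). lra.
Qed.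

Lemma dist3_sym p q : dist3 p q = dist3 q p.
Proof. unfold dist3. f_equal. ring. Qed.

Lemma xb_bound b1 b2 p : b1^2 + b2^2 = 1 -> upper_hemisphere p -> (xb b1 b2 p)^2 <= 1.
Proof.
  intros Hb [Hp _]. unfold xb.
  assert ((b1 * px p + b2 * py p)^2 + (b1 * py p - b2 * px p)^2 = (b1^2+b2^2)*(px p^2 + py p^2)) by ring.
  rewrite Hb in H. pose proof (pow2_ge_0 (b1 * py p - b2 * px p)). pose proof (pow2_ge_0 (pz p)). lra.
Qed.

Lemma cr_trans b1 b2 h w2 x y z : wpos b1 b2 h w2 x -> wpos b1 b2 h w2 y -> wpos b1 b2 h w2 z ->
  0 <= cr b1 b2 x y -> 0 <= cr b1 b2 y z -> 0 <= cr b1 b2 x z.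
Proof.
  unfold wpos, cr. intros Hx Hy Hz H1 H2.
  set (X1 := xb b1 b2 x) in *. set (Y1 := xb b1 b2 y) in *. set (Z1 := xb b1 b2 z) in *.
  assert (E : (X1 * pz y - pz x * Y1) * (h * Z1 + w2 * pz z) + (Y1 * pz z - pz y * Z1) * (h * X1 + w2 * pz x)
   = (X1 * pz z - pz x * Z1) * (h * Y1 + w2 * pz y)) by ring.
  destruct (Rlt_or_le (X1 * pz z - pz x * Z1) 0); [|lra]. nra.
Qed.

Lemma cr_refl b1 b2 x : 0 <= cr b1 b2 x x.
Proof. unfold cr. lra. Qed.

Lemma cr_tot b1 b2 x y : 0 <= cr b1 b2 x y \/ 0 <= cr b1 b2 y x.
Proof. unfold cr. lra. Qed.

Lemma D_pos b1 b2 h w2 p q : wpos b1 b2 h w2 p -> wpos b1 b2 h w2 q -> cr b1 b2 q p = 0 ->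
  0 < xb b1 b2 p * xb b1 b2 q + pz p * pz q.
Proof.
  unfold wpos, cr. intros Hp Hq HK.
  set (p1 := xb b1 b2 p) in *. set (q1 := xb b1 b2 q) in *.
  assert (E : (h * q1 + w2 * pz q) * (p1^2 + pz p^2) - (p1 * q1 + pz p * pz q) * (h * p1 + w2 * pz p)
     = (p1 * pz q - pz p * q1) * (w2 * p1 - h * pz p)) by ring.
  assert (p1 * pz q - pz p * q1 = 0) by lra. rewrite H, Rmult_0_l in E.
  assert (0 < p1^2 + pz p^2).
  { destruct (Req_dec p1 0) as [H0|H0]; destruct (Req_dec (pz p) 0) as [H1|H1]; try nra. }
  nra.
Qed.

Definition newP (b1 b2 t : R) (P : pt3) : pt3 :=
  let r := 1 + t^2 in let c := (1 - t^2) / r in let s := 2 * t / r in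
  let pb := xb b1 b2 P in let al := (c - 1) * pb - s * pz P in
  Pt (px P + al * b1) (py P + al * b2) (c * pz P + s * pb).

Lemma newP_hem b1 b2 h w2 t P : b1^2 + b2^2 = 1 -> 0 <= h -> 0 <= w2 ->
  upper_hemisphere P -> wpos b1 b2 h w2 P -> 0 < t <= 1/2 -> (pz P = 0 \/ 4 * t < pz P) ->
  upper_hemisphere (newP b1 b2 t P).
Proof.
  intros Hb Hh Hw HP Hpos Ht Hz.
  pose proof (xb_bound b1 b2 P Hb HP) as Hxb.
  destruct HP as [HP1 HP2]. unfold wpos in Hpos.
  unfold newP, upper_hemisphere; cbn [px py pz].
  set (pb := xb b1 b2 P) in *.
  assert (Hr : 0 < 1 + t^2) by nra.
  set (c := (1 - t^2) / (1 + t^2)). set (s := 2 * t / (1 + t^2)).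
  assert (Hcs : c^2 + s^2 = 1) by (unfold c, s; field; lra).
  split.
  - set (al := (c - 1) * pb - s * pz P).
    assert (E : (px P + al * b1) ^ 2 + (py P + al * b2) ^ 2 + (c * pz P + s * pb) ^ 2
       - (px P ^ 2 + py P ^ 2 + pz P ^ 2)
       = (b1^2 + b2^2 - 1) * al^2 + (c^2 + s^2 - 1) * (pb^2 + pz P^2)).
    { unfold al, pb, xb. ring. }
    rewrite Hb, Hcs in E. lra.
  - assert (E : c * pz P + s * pb = ((1 - t^2) * pz P + 2 * t * pb) / (1 + t^2))
      by (unfold c, s; field; lra).
    rewrite E. apply Rle_mult_inv_pos; [|lra].
    assert (Ht2 : 0 < 1 - t^2) by nra. destruct (Rle_or_lt 0 pb).
    + assert (0 <= (1 - t^2) * pz P) by nra. assert (0 <= 2 * t * pb) by nra. lra.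
    + assert (pz P > 0) by nra.
      destruct Hz as [Hz|Hz]; [lra|].
      assert (pb >= -1) by nra. nra.
Qed.

Lemma newP_dot b1 b2 h w2 t P Q : b1^2 + b2^2 = 1 ->
  upper_hemisphere P -> upper_hemisphere Q -> wpos b1 b2 h w2 P -> wpos b1 b2 h w2 Q ->
  0 < t <= 1/2 -> 0 <= cr b1 b2 Q P -> (cr b1 b2 Q P = 0 \/ 4 * t < cr b1 b2 Q P) ->
  dot (newP b1 b2 t P) Q < dot P Q.
Proof.
  intros Hb HP HQ HwP HwQ Ht HK HK2.
  pose proof (xb_bound b1 b2 P Hb HP). pose proof (xb_bound b1 b2 Q Hb HQ).
  assert (Hr : 0 < 1 + t^2) by nra.
  set (D := xb b1 b2 P * xb b1 b2 Q + pz P * pz Q).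
  assert (E : dot (newP b1 b2 t P) Q - dot P Q = - (2 * t / (1 + t^2)) * (t * D + cr b1 b2 Q P)).
  { unfold newP, dot, D, cr, xb; simpl. field. lra. }
  assert (0 < t * D + cr b1 b2 Q P).
  { destruct HK2 as [HK2|HK2].
    - pose proof (D_pos b1 b2 h w2 P Q HwP HwQ HK2). fold D in H1. rewrite HK2. nra.
    - destruct HP as [HP1 HP2]. destruct HQ as [HQ1 HQ2].
      assert (pz P ^2 <= 1) by (pose proof (pow2_ge_0 (px P)); pose proof (pow2_ge_0 (py P)); lra).
      assert (pz Q ^2 <= 1) by (pose proof (pow2_ge_0 (px Q)); pose proof (pow2_ge_0 (py Q)); lra).
      assert (D >= -2) by (unfold D; pose proof (pow2_ge_0 (xb b1 b2 P + xb b1 b2 Q)); assert (0 <= pz P * pz Q) by (apply Rmult_le_pos; lra); nra). nra. }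
  assert (0 < 2 * t / (1 + t^2)) by (apply Rdiv_lt_0_compat; lra).
  nra.
Qed.

Lemma small_a a : 0 <= a -> exists e, 0 < e /\ forall t, 0 < t <= e -> a = 0 \/ 4 * t < a.
Proof.
  intros Ha. destruct (Req_dec a 0) as [H|H].
  - exists 1. split; [lra|]. intros; left; auto.
  - exists (a / 8). split; [lra|]. intros t Ht. right. lra.
Qed.

Lemma improve1 b1 b2 h w2 P Q1 Q2 Q3 :
  b1^2 + b2^2 = 1 -> 0 <= h -> 0 <= w2 ->
  upper_hemisphere P -> upper_hemisphere Q1 -> upper_hemisphere Q2 -> upper_hemisphere Q3 ->
  wpos b1 b2 h w2 P -> wpos b1 b2 h w2 Q1 -> wpos b1 b2 h w2 Q2 -> wpos b1 b2 h w2 Q3 ->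
  0 <= cr b1 b2 Q1 P -> 0 <= cr b1 b2 Q2 P -> 0 <= cr b1 b2 Q3 P ->
  exists P', upper_hemisphere P' /\ dist3 P Q1 < dist3 P' Q1 /\
     dist3 P Q2 < dist3 P' Q2 /\ dist3 P Q3 < dist3 P' Q3.
Proof.
  intros Hb Hh Hw HP H1 H2 H3 WP W1 W2 W3 K1 K2 K3.
  destruct (small_a _ K1) as [e1 [E1 F1]].
  destruct (small_a _ K2) as [e2 [E2 F2]].
  destruct (small_a _ K3) as [e3 [E3 F3]].
  destruct (small_a (pz P) (proj2 HP)) as [e4 [E4 F4]].
  set (t := Rmin (Rmin e1 e2) (Rmin e3 (Rmin e4 (1/2)))).
  assert (Ht0 : 0 < t).
  { unfold t. repeat apply Rmin_pos; lra. }
  pose proof (Rmin_l (Rmin e1 e2) (Rmin e3 (Rmin e4 (1/2)))) as M1.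
  pose proof (Rmin_r (Rmin e1 e2) (Rmin e3 (Rmin e4 (1/2)))) as M2.
  pose proof (Rmin_l e1 e2). pose proof (Rmin_r e1 e2).
  pose proof (Rmin_l e3 (Rmin e4 (1/2))). pose proof (Rmin_r e3 (Rmin e4 (1/2))).
  pose proof (Rmin_l e4 (1/2)). pose proof (Rmin_r e4 (1/2)).
  fold t in M1, M2.
  assert (Ht : 0 < t <= 1/2) by lra.
  assert (HP' : upper_hemisphere (newP b1 b2 t P)).
  { apply (newP_hem b1 b2 h w2); auto. apply F4. lra. }
  exists (newP b1 b2 t P). split; auto.
  split; [|split]; apply dist_lt; auto; eapply newP_dot; eauto.
  - apply F1; lra.
  - apply F2; lra.
  - apply F3; lra.
Qed.

Lemma max4 (T:Type) (Rl: T->T->Prop) (S: T -> Prop) a b c d :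
  (forall x y, Rl x y \/ Rl y x) ->
  (forall x y z, S x -> S y -> S z -> Rl x y -> Rl y z -> Rl x z) ->
  S a -> S b -> S c -> S d ->
  exists m, (m = a \/ m = b \/ m = c \/ m = d) /\ Rl a m /\ Rl b m /\ Rl c m /\ Rl d m.
Proof.
  intros Tot Tr Sa Sb Sc Sd.
  assert (Rf : forall x, Rl x x) by (intros x; destruct (Tot x x); auto).
  assert (Step : forall m x, exists m', (m' = m \/ m' = x) /\ Rl m m' /\ Rl x m').
  { intros m x. destruct (Tot m x); [exists x | exists m]; auto. }
  destruct (Step a b) as [m1 [O1 [A1 B1]]].
  assert (S1 : S m1) by (destruct O1; subst; auto).
  destruct (Step m1 c) as [m2 [O2 [A2 B2]]].
  assert (S2 : S m2) by (destruct O2; subst; auto).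
  destruct (Step m2 d) as [m3 [O3 [A3 B3]]].
  assert (S3 : S m3) by (destruct O3; subst; auto).
  exists m3. split.
  - destruct O3 as [->| ->]; auto. destruct O2 as [->| ->]; auto.
    destruct O1 as [->| ->]; auto.
  - repeat split; auto.
    + apply (Tr a m2 m3); auto. apply (Tr a m1 m2); auto.
    + apply (Tr b m2 m3); auto. apply (Tr b m1 m2); auto.
    + apply (Tr c m2 m3); auto.
Qed.

Lemma unit_dir ux uy : exists b1 b2 h, b1^2 + b2^2 = 1 /\ 0 <= h /\ ux = h * b1 /\ uy = h * b2.
Proof.
  destruct (Req_dec (ux^2 + uy^2) 0) as [H|H].
  - exists 1, 0, 0. assert (ux = 0) by nra. assert (uy = 0) by nra. subst. repeat split; lra.
  - assert (Hp : 0 < ux^2 + uy^2) by (pose proof (pow2_ge_0 ux); pose proof (pow2_ge_0 uy); lra).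
    set (h := sqrt (ux^2 + uy^2)).
    assert (Hh : 0 < h) by (apply sqrt_lt_R0; auto).
    assert (Hh2 : h * h = ux^2 + uy^2) by (apply sqrt_sqrt; lra).
    exists (ux / h), (uy / h), h. repeat split.
    + field_simplify; [|lra]. rewrite <- Hh2. field. lra.
    + lra.
    + field. lra.
    + field. lra.
Qed.

Lemma comb_norm l0 l1 l2 l3 x1 x2 x3 x4 : 0 < l0+l1+l2+l3 ->
  0 + l0*x1 + l1*x2 + l2*x3 + l3*x4 = 0 ->
  0 = l0/(l0+l1+l2+l3)*x1 + l1/(l0+l1+l2+l3)*x2 + l2/(l0+l1+l2+l3)*x3 + l3/(l0+l1+l2+l3)*x4.
Proof.
  intros Hs H.
  replace (l0/(l0+l1+l2+l3)*x1 + l1/(l0+l1+l2+l3)*x2 + l2/(l0+l1+l2+l3)*x3 + l3/(l0+l1+l2+l3)*x4)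
    with ((0 + l0*x1 + l1*x2 + l2*x3 + l3*x4) / (l0+l1+l2+l3)) by (field; lra).
  rewrite H. field. lra.
Qed.

Theorem lemma1 (A B C D : pt3) :
  upper_hemisphere A -> upper_hemisphere B ->
  upper_hemisphere C -> upper_hemisphere D ->
  (forall A' B' C' D' : pt3,
      upper_hemisphere A' -> upper_hemisphere B' ->
      upper_hemisphere C' -> upper_hemisphere D' ->
      sum_dist4 A' B' C' D' <= sum_dist4 A B C D) ->
  in_convex_hull4 origin3 A B C D.
Proof.
  intros HA HB HC HD Hmax.
  set (v := fun i : nat => match i with 0%nat => A | 1%nat => B | 2%nat => C | _ => D end).
  destruct (gordan4 v) as [[u Hu] | [l [L1 [L2 [L3 [L4 L5]]]]]].
  2:{ simpl in L2, L3, L4, L5.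
      assert (0 <= l 0%nat) by (apply L1; lia).
      assert (0 <= l 1%nat) by (apply L1; lia).
      assert (0 <= l 2%nat) by (apply L1; lia).
      assert (0 <= l 3%nat) by (apply L1; lia).
      assert (Hs : 0 < l 0%nat + l 1%nat + l 2%nat + l 3%nat) by lra.
      set (s := l 0%nat + l 1%nat + l 2%nat + l 3%nat) in *.
      exists (l 0%nat / s), (l 1%nat / s), (l 2%nat / s), (l 3%nat / s).
      repeat split; try (apply Rle_mult_inv_pos; lra).
      - unfold s. field. lra.
      - simpl. apply comb_norm; auto.
      - simpl. apply comb_norm; auto.
      - simpl. apply comb_norm; auto. }
  exfalso.
  pose proof (Hu 0%nat ltac:(lia)) as UA. pose proof (Hu 1%nat ltac:(lia)) as UB.
  pose proof (Hu 2%nat ltac:(lia)) as UC. pose proof (Hu 3%nat ltac:(lia)) as UD.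
  simpl in UA, UB, UC, UD. unfold dot in UA, UB, UC, UD.
  assert (Hu2 : exists ux uy uz, 0 <= uz /\
     0 < ux * px A + uy * py A + uz * pz A /\ 0 < ux * px B + uy * py B + uz * pz B /\
     0 < ux * px C + uy * py C + uz * pz C /\ 0 < ux * px D + uy * py D + uz * pz D).
  { destruct HA as [_ ZA], HB as [_ ZB], HC as [_ ZC], HD as [_ ZD].
    destruct (Rlt_or_le (pz u) 0).
    - exists (px u), (py u), 0. repeat split; try lra; nra.
    - exists (px u), (py u), (pz u). repeat split; lra. }
  destruct Hu2 as [ux [uy [uz [Huz [VA [VB [VC VD]]]]]]].
  destruct (unit_dir ux uy) as [b1 [b2 [h [Hb [Hh [Ex Ey]]]]]].
  assert (W : forall P, 0 < ux * px P + uy * py P + uz * pz P -> wpos b1 b2 h uz P).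
  { intros P HP. unfold wpos, xb. rewrite Ex, Ey in HP. lra. }
  pose proof (W A VA) as WA. pose proof (W B VB) as WB.
  pose proof (W C VC) as WC. pose proof (W D VD) as WD.
  destruct (max4 pt3 (fun q p => 0 <= cr b1 b2 q p) (wpos b1 b2 h uz) A B C D)
    as [m [Om [RA [RB [RC RD]]]]]; auto.
  { intros; apply cr_tot. }
  { intros x y z Sx Sy Sz. apply (cr_trans b1 b2 h uz); auto. }
  pose proof (dist3_sym A B). pose proof (dist3_sym A C). pose proof (dist3_sym A D).
  pose proof (dist3_sym B C). pose proof (dist3_sym B D). pose proof (dist3_sym C D).
  destruct Om as [ Em | [ Em | [ Em | Em ]]]; subst m.
  - destruct (improve1 b1 b2 h uz A B C D) as [P' [HP' [I1 [I2 I3]]]]; auto.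
    pose proof (Hmax P' B C D HP' HB HC HD). unfold sum_dist4 in *.
    pose proof (dist3_sym P' B). pose proof (dist3_sym P' C). pose proof (dist3_sym P' D). lra.
  - destruct (improve1 b1 b2 h uz B A C D) as [P' [HP' [I1 [I2 I3]]]]; auto.
    pose proof (Hmax A P' C D HA HP' HC HD). unfold sum_dist4 in *.
    pose proof (dist3_sym P' A). pose proof (dist3_sym P' C). pose proof (dist3_sym P' D). lra.
  - destruct (improve1 b1 b2 h uz C A B D) as [P' [HP' [I1 [I2 I3]]]]; auto.
    pose proof (Hmax A B P' D HA HB HP' HD). unfold sum_dist4 in *.
    pose proof (dist3_sym P' A). pose proof (dist3_sym P' B). pose proof (dist3_sym P' D). lra.
  - destruct (improve1 b1 b2 h uz D A B C) as [P' [HP' [I1 [I2 I3]]]]; auto.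
    pose proof (Hmax A B C P' HA HB HC HP'). unfold sum_dist4 in *.
    pose proof (dist3_sym P' A). pose proof (dist3_sym P' B). pose proof (dist3_sym P' C). lra.
Qed.
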